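(* Let $a\in\mathbb F^*$, let $g,h\in\mathcal R$ with $x^n-a=hg$, and let $c=\gamma(a,g)$. Then the map $$\psi:\mathcal S_a\to\mathcal S_{\theta^{-n}(c)},\qquad \overline f\mapsto\overline{f\,\theta^{-n}(h)}$$ is a well-defined left $\mathcal R$-module homomorphism with $\ker\psi=\mathcal R\overline g$.
   Context: $\mathbb F$ is a finite field, $\theta\in\mathrm{Aut}(\mathbb F)$, $\mathcal R=\mathbb F[x;\theta]$ the skew polynomial ring (elements $\sum f_ix^i$ with left coefficients, $xb=\theta(b)x$), $n\in\mathbb N$. Integer powers of $\theta$ act on $\mathcal R$ coefficientwise. For $e\in\mathbb F^*$, $\mathcal S_e=\mathcal R/\mathcal R(x^n-e)$ (left $\mathcal R$-module), $\overline f$ the coset of $f$, $\mathcal R\overline g$ the left submodule of $\mathcal S_a$ generated by $\overline g$. For a right divisor $g=\sum g_ix^i$ of $x^n-a$, $\gamma(a,g)=a\,g_0^{-1}\theta^n(g_0)$. *)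

(* Defs.v *)
From HB Require Import structures.
From mathcomp Require Import all_boot all_order all_algebra all_field.
Set Implicit Arguments. Unset Strict Implicit. Unset Printing Implicit Defensive.
Import GRing.Theory.
Local Open Scope ring_scope.

(* Skew polynomial ring F[x; theta]: elements are represented by their
   (left) coefficient sequences, i.e. by {poly F}; addition is the usual one
   and multiplication is the skew product determined by x b = theta(b) x:
     (sum_i f_i x^i) (sum_j g_j x^j) = sum_{i,j} f_i theta^i(g_j) x^(i+j). *)
Definition skmul {F : fieldType} (theta : F -> F) (f g : {poly F}) : {poly F} :=
  \sum_(i < size f) (f`_i *: 'X^i) * map_poly (iter i theta) g.

Definition skmap {F : fieldType} (sigma : F -> F) (k : nat) (f : {poly F}) :
  {poly F} := map_poly (iter k sigma) f.

(* Congruence modulo the left ideal R (x^n - e): f1 and f2 have the same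
   coset in S_e = R / R(x^n - e). *)
Definition skcong {F : fieldType} (theta : F -> F) (n : nat) (e : F)
  (f1 f2 : {poly F}) : Prop :=
  exists q : {poly F}, f1 - f2 = skmul theta q ('X^n - e%:P).

Definition skgamma {F : fieldType} (theta : F -> F) (n : nat) (a : F)
  (g : {poly F}) : F :=
  a * (g`_0)^-1 * iter n theta (g`_0).

(* Main.v *)
Require Import Defs.
From HB Require Import structures.
From mathcomp Require Import all_boot all_order all_algebra all_field.
From mathcomp Require Import zify ring.
Import GRing.Theory.
Local Open Scope ring_scope.
Set Implicit Arguments. Unset Strict Implicit.
Section Morph.
Variable F : fieldType.

Definition rmor (s : F -> F) :=
  [/\ s 0 = 0, s 1 = 1, forall x y, s (x + y) = s x + s y &
      forall x y, s (x * y) = s x * s y].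

Lemma rmor_rm (f : {rmorphism F -> F}) : rmor f.
Proof. by split; [exact: rmorph0|exact: rmorph1|exact: rmorphD|exact: rmorphM]. Qed.

Lemma rmor_iter s k : rmor s -> rmor (iter k s).
Proof.
case=> s0 s1 sD sM; split.
- by elim: k => //= k ->.
- by elim: k => //= k ->.
- by elim: k => //= k IH x y; rewrite IH sD.
- by elim: k => //= k IH x y; rewrite IH sM.
Qed.

Lemma rmor_inv s t : rmor s -> cancel s t -> cancel t s -> rmor t.
Proof.
case=> s0 s1 sD sM st ts; split.
- by rewrite -s0 st.
- by rewrite -s1 st.
- by move=> x y; rewrite -{1}(ts x) -{1}(ts y) -sD st.
- by move=> x y; rewrite -{1}(ts x) -{1}(ts y) -sM st.
Qed.

Lemma rmorN s : rmor s -> forall x, s (- x) = - s x.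
Proof.
case=> s0 _ sD _ x; apply/eqP; rewrite -subr_eq0 opprK -sD addNr //.
by rewrite s0.
Qed.

Lemma rmorB s : rmor s -> forall x y, s (x - y) = s x - s y.
Proof. by move=> hs x y; case: (hs) => _ _ sD _; rewrite sD rmorN. Qed.

Lemma rmor_sum s : rmor s -> forall m (G : 'I_m -> F),
  s (\sum_(i < m) G i) = \sum_(i < m) s (G i).
Proof.
case=> s0 _ sD _ m G; elim/big_rec2: _ => //= i y1 y2 _ <-; exact: sD.
Qed.

Lemma rmorV s : rmor s -> injective s -> forall x, s (x^-1) = (s x)^-1.
Proof.
move=> hs sinj x; case: (hs) => s0 s1 _ sM.
have [->|x0] := eqVneq x 0; first by rewrite invr0 s0 invr0.
have sx0 : s x != 0 by apply: contraNneq x0 => h; apply/eqP/sinj; rewrite h s0.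
by apply: (mulIf sx0); rewrite -sM mulVf // mulVf.
Qed.

Lemma rmor_nat s : rmor s -> forall b : bool, s b%:R = b%:R.
Proof. by case=> s0 s1 _ _ [|]. Qed.

End Morph.
Section Skew.
Variable F : fieldType.
Variable th : F -> F.
Hypothesis Hth : rmor th.
Hypothesis Hinj : injective th.
Local Notation T i := (iter i th).
Local Notation sk := (skmul th).

Lemma T_rmor i : rmor (T i). Proof. exact: rmor_iter. Qed.
Lemma T0 i : T i 0 = 0. Proof. by case: (T_rmor i). Qed.

Lemma coef_skmul f g k :
  (sk f g)`_k = \sum_(i < k.+1) f`_i * T i (g`_(k - i)).
Proof.
rewrite /skmul coef_sum.
under eq_bigr => i _ do rewrite -scalerAl coefZ coefXnM coef_map_id0 ?T0 //.
rewrite (big_ord_widen (size f + k.+1) (fun i => f`_i * (if (k < i)%N then 0 else T i g`_(k - i)))) ?leq_addr //.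
rewrite (big_ord_widen (size f + k.+1) (fun i => f`_i * T i g`_(k - i))) ?leq_addl //.
rewrite big_mkcond [RHS]big_mkcond; apply: eq_bigr => i _ /=.
have [hf|hf] := ltnP i (size f); have [hk|hk] := ltnP k i.
- by rewrite ltnS leqNgt hk /= mulr0.
- by rewrite ltnS hk.
- by rewrite ltnS leqNgt hk.
- by rewrite ltnS hk nth_default // mul0r.
Qed.

Lemma skmulDl f1 f2 g : sk (f1 + f2) g = sk f1 g + sk f2 g.
Proof.
apply/polyP => k; rewrite coefD !coef_skmul -big_split /=.
by apply: eq_bigr => i _; rewrite coefD mulrDl.
Qed.

Lemma skmulDr f g1 g2 : sk f (g1 + g2) = sk f g1 + sk f g2.
Proof.
apply/polyP => k; rewrite coefD !coef_skmul -big_split /=.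
apply: eq_bigr => i _; rewrite coefD; case: (T_rmor i) => _ _ ->  _.
by rewrite mulrDr.
Qed.

Lemma skmul0l g : sk 0 g = 0.
Proof. by apply/polyP => k; rewrite coef_skmul coef0 big1 // => i _; rewrite coef0 mul0r. Qed.

Lemma skmul0r f : sk f 0 = 0.
Proof. by apply/polyP => k; rewrite coef_skmul coef0 big1 // => i _; rewrite coef0 T0 mulr0. Qed.

Lemma skmulNl f g : sk (- f) g = - sk f g.
Proof. by apply/eqP; rewrite -subr_eq0 opprK -skmulDl addNr skmul0l. Qed.
Lemma skmulNr f g : sk f (- g) = - sk f g.
Proof. by apply/eqP; rewrite -subr_eq0 opprK -skmulDr addNr skmul0r. Qed.
Lemma skmulBl f1 f2 g : sk (f1 - f2) g = sk f1 g - sk f2 g.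
Proof. by rewrite skmulDl skmulNl. Qed.
Lemma skmulBr f g1 g2 : sk f (g1 - g2) = sk f g1 - sk f g2.
Proof. by rewrite skmulDr skmulNr. Qed.

Lemma skmul_suml m (G : 'I_m -> {poly F}) g :
  sk (\sum_(i < m) G i) g = \sum_(i < m) sk (G i) g.
Proof. by elim/big_rec2: _ => [|i y1 y2 _ <-]; rewrite ?skmul0l ?skmulDl. Qed.

Lemma skmul_sumr m (G : 'I_m -> {poly F}) f :
  sk f (\sum_(i < m) G i) = \sum_(i < m) sk f (G i).
Proof. by elim/big_rec2: _ => [|i y1 y2 _ <-]; rewrite ?skmul0r ?skmulDr. Qed.

Lemma skmul_monoL a i p : sk (a *: 'X^i) p = a *: ('X^i * map_poly (T i) p).
Proof.
apply/polyP => k; rewrite coef_skmul coefZ coefXnM coef_map_id0 ?T0 //.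
under eq_bigr => j _ do rewrite coefZ coefXn.
case: ltnP => hk.
  by rewrite mulr0 big1 // => j _; rewrite (ltn_eqF (leq_trans (ltn_ord j) hk)) mulr0 mul0r.
rewrite (bigD1 (Ordinal (hk : (i < k.+1)%N))) //= eqxx mulr1 big1 ?addr0 //.
move=> j; rewrite -val_eqE /= => /negPf ->; by rewrite mulr0 mul0r.
Qed.

Lemma map_T_sk i a j p : map_poly (T i) (a *: ('X^j * p)) = T i a *: ('X^j * map_poly (T i) p).
Proof.
apply/polyP => k; rewrite coef_map_id0 ?T0 // !coefZ !coefXnM.
case: ltnP => _; first by rewrite !mulr0 T0.
by rewrite coef_map_id0 ?T0 //; case: (T_rmor i) => _ _ _ ->.
Qed.

Lemma map_T_comp i j p : map_poly (T i) (map_poly (T j) p) = map_poly (T (i + j)) p.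
Proof. by apply/polyP => k; rewrite !coef_map_id0 ?T0 // iterD. Qed.

Lemma skmul_mono a i b j : sk (a *: 'X^i) (b *: 'X^j) = (a * T i b) *: 'X^(i + j).
Proof.
rewrite skmul_monoL; apply/polyP => k.
rewrite !coefZ coefXnM coef_map_id0 ?T0 // coefZ !coefXn.
case: ltnP => hk.
  by rewrite (ltn_eqF (leq_trans hk (leq_addr _ _))) !mulr0.
case: (T_rmor i) => _ _ _ ->; rewrite rmor_nat; last exact: T_rmor.
by rewrite mulrA -(eqn_add2l i) subnKC.
Qed.

Lemma skmulA f g h : sk (sk f g) h = sk f (sk g h).
Proof.
have Ef := coefK f; have Eg := coefK g; have Eh := coefK h.
rewrite poly_def in Ef; rewrite poly_def in Eg; rewrite poly_def in Eh.
rewrite -Ef (skmul_suml (fun i : 'I_(size f) => f`_i *: 'X^i) g).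
rewrite (skmul_suml (fun i : 'I_(size f) => sk (f`_i *: 'X^i) g) h).
rewrite (skmul_suml (fun i : 'I_(size f) => f`_i *: 'X^i) (sk g h)).
apply: eq_bigr => i _.
rewrite -Eg (skmul_sumr (fun j : 'I_(size g) => g`_j *: 'X^j) (f`_i *: 'X^i)).
rewrite (skmul_suml (fun j : 'I_(size g) => sk (f`_i *: 'X^i) (g`_j *: 'X^j)) h).
rewrite (skmul_suml (fun j : 'I_(size g) => g`_j *: 'X^j) h).
rewrite (skmul_sumr (fun j : 'I_(size g) => sk (g`_j *: 'X^j) h) (f`_i *: 'X^i)).
apply: eq_bigr => j _.
rewrite -Eh (skmul_sumr (fun l : 'I_(size h) => h`_l *: 'X^l) (g`_j *: 'X^j)).
rewrite (skmul_sumr (fun l : 'I_(size h) => h`_l *: 'X^l)).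
rewrite (skmul_sumr (fun l : 'I_(size h) => sk (g`_j *: 'X^j) (h`_l *: 'X^l))).
apply: eq_bigr => l _.
rewrite !skmul_mono; case: (T_rmor i) => _ _ _ ->.
by rewrite addnA mulrA iterD.
Qed.

Lemma skmul_CL d q : sk d%:P q = d *: q.
Proof.
apply/polyP => k; rewrite coef_skmul big_ord_recl coefC eqxx /= coefZ subn0.
by rewrite big1 ?addr0 // => i _; rewrite coefC /= mul0r.
Qed.

Lemma mapXn i m : map_poly (T i) 'X^m = 'X^m.
Proof.
apply/polyP => k; rewrite coef_map_id0 ?T0 // coefXn; exact: rmor_nat (T_rmor i) _.
Qed.

Lemma skmul_XnR p m : sk p 'X^m = p * 'X^m.
Proof.
rewrite /skmul; under eq_bigr => i _ do rewrite mapXn.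
by rewrite -mulr_suml -poly_def coefK.
Qed.

Lemma skmul_XnL p m : sk 'X^m p = 'X^m * map_poly (T m) p.
Proof. by have := skmul_monoL 1 m p; rewrite !scale1r. Qed.

Lemma coef0_skmul f g : (sk f g)`_0 = f`_0 * g`_0.
Proof. by rewrite coef_skmul big_ord_recl big_ord0 addr0. Qed.

Lemma size_skmul_le f g : (size (sk f g) <= (size f + size g).-1)%N.
Proof.
apply/leq_sizeP => j hj; rewrite coef_skmul big1 // => i _.
have [hf|hf] := ltnP i (size f).
  by rewrite (nth_default 0 (_ : size g <= j - i)%N) ?T0 ?mulr0 //; lia.
by rewrite nth_default ?mul0r.
Qed.

Lemma T_neq0 i x : x != 0 -> T i x != 0.
Proof.
move=> x0; elim: i => //= i IH; apply: contra IH => /eqP h.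
by apply/eqP; apply: Hinj; rewrite h; case: Hth.
Qed.

Lemma coef_skmul_lead f g : f != 0 -> g != 0 ->
  (sk f g)`_((size f).-1 + (size g).-1) = lead_coef f * T (size f).-1 (lead_coef g).
Proof.
move=> f0 g0; rewrite coef_skmul.
have hm : ((size f).-1 < ((size f).-1 + (size g).-1).+1)%N by lia.
rewrite (bigD1 (Ordinal hm)) //= addKn -!lead_coefE big1 ?addr0 // => i.
rewrite -val_eqE /= => hi.
have [hl|hl] := ltnP i (size f).-1.
  rewrite (nth_default 0 (_ : size g <= _ - i)%N) ?T0 ?mulr0 //.
  have : (0 < size g)%N by rewrite size_poly_gt0.
  move: hl; move: (size f) (size g) (nat_of_ord i) => a b c. lia.
rewrite nth_default ?mul0r //.
have : (0 < size f)%N by rewrite size_poly_gt0.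
move: hi hl => /eqP; move: (size f) (nat_of_ord i) => a c; lia.
Qed.

Lemma size_skmul f g : f != 0 -> g != 0 ->
  size (sk f g) = (size f + size g).-1.
Proof.
move=> f0 g0; apply/eqP; rewrite eqn_leq size_skmul_le /=.
have := coef_skmul_lead f0 g0.
have nz : lead_coef f * T (size f).-1 (lead_coef g) != 0.
  by rewrite mulf_neq0 ?T_neq0 ?lead_coef_eq0.
move=> E; rewrite -E in nz.
have : ((size f).-1 + (size g).-1 < size (sk f g))%N.
  by rewrite ltnNge; apply: contra nz => h; rewrite nth_default.
have : (0 < size f)%N by rewrite size_poly_gt0.
have : (0 < size g)%N by rewrite size_poly_gt0.
move: (size f) (size g) (size (sk f g)) => a b c; lia.
Qed.

Lemma skmul_eq0 f g : sk f g = 0 -> f = 0 \/ g = 0.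
Proof.
move=> h; have [f0|f0] := eqVneq f 0; first by left.
have [g0|g0] := eqVneq g 0; first by right.
have := size_skmul f0 g0; rewrite h size_poly0.
have : (0 < size f)%N by rewrite size_poly_gt0.
have : (0 < size g)%N by rewrite size_poly_gt0.
move: (size f) (size g) => a b; lia.
Qed.

Lemma map_skmul s : rmor s -> (forall x, s (th x) = th (s x)) ->
  forall f g, map_poly s (sk f g) = sk (map_poly s f) (map_poly s g).
Proof.
move=> hs com f g; have s0 : s 0 = 0 by case: hs.
have comT : forall i x, s (T i x) = T i (s x).
  by move=> i x; elim: i => //= i IH; rewrite com IH.
apply/polyP => k; rewrite coef_map_id0 // !coef_skmul rmor_sum //.
apply: eq_bigr => i _; case: (hs) => _ _ _ ->.
by rewrite !coef_map_id0 // comT.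
Qed.

End Skew.
Unset Implicit Arguments.
Lemma iter_cancel (T : Type) (f g : T -> T) k : cancel f g -> cancel (iter k f) (iter k g).
Proof.
move=> fg; elim: k => // k IH x.
by rewrite [iter k.+1 f x]iterSr iterS IH fg.
Qed.

Lemma iter_comm (T : Type) (f g : T -> T) k : (forall x, g (f x) = f (g x)) ->
  forall x, iter k g (f x) = f (iter k g x).
Proof. by move=> com x; elim: k => //= k ->; rewrite com. Qed.

Lemma mapXnC (F : fieldType) (s : F -> F) (hs : rmor s) n (a : F) :
  map_poly s ('X^n - a%:P) = 'X^n - (s a)%:P.
Proof.
have s0 : s 0 = 0 by case: hs.
apply/polyP => k; rewrite coef_map_id0 // !coefB coefXn !coefC rmorB // rmor_nat //.
by case: (k == 0%N) => /=; rewrite ?s0.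
Qed.

Theorem proposition6p5 (F : finFieldType) (theta : {rmorphism F -> F})
    (thetainv : F -> F) (Hinv1 : cancel theta thetainv)
    (Hinv2 : cancel thetainv theta)
    (n : nat) (Hn : (0 < n)%N) (a : F) (Ha : a != 0) (g h : {poly F})
    (Hhg : 'X^n - a%:P = skmul theta h g) :
  let c := skgamma theta n a g in
  let c' := iter n thetainv c in
  let psi := fun f : {poly F} => skmul theta f (skmap thetainv n h) in
  [/\ (forall f1 f2, skcong theta n a f1 f2 ->
          skcong theta n c' (psi f1) (psi f2)),
      (forall f1 f2, skcong theta n c' (psi (f1 + f2)) (psi f1 + psi f2)),
      (forall r f, skcong theta n c' (psi (skmul theta r f))
                                     (skmul theta r (psi f)))
    & (forall f, skcong theta n c' (psi f) 0 <->
          exists r : {poly F}, skcong theta n a f (skmul theta r g))].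
Proof.
move=> c c' psi.
have Hth : rmor (theta : F -> F) := rmor_rm theta.
have Hinj : injective theta := can_inj Hinv1.
have Hti : rmor thetainv := rmor_inv Hth Hinv1 Hinv2.
pose S := iter n thetainv.
have HS : rmor S := rmor_iter n Hti.
have ST : forall x, S (iter n theta x) = x := @iter_cancel _ _ _ n Hinv1.
have TS : forall x, iter n theta (S x) = x := @iter_cancel _ _ _ n Hinv2.
have Sinj : injective S := can_inj TS.
have com : forall x, S (theta x) = theta (S x).
  by apply: (@iter_comm _ _ _ n) => x; rewrite Hinv1 Hinv2.
pose h' := map_poly S h; pose g' := map_poly S g; pose a' := S a.
have E1 : skmul theta h' g' = 'X^n - a'%:P.
  by rewrite -map_skmul // -Hhg mapXnC.
have A := skmulA Hth.
have g00 : g`_0 != 0.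
  apply: contraNneq Ha => g0.
  have := congr1 (fun p : {poly F} => p`_0) Hhg.
  rewrite /= (coef0_skmul Hth). rewrite g0 mulr0 coefB coefXn coefC /= (ltn_eqF Hn) /= sub0r.
  by move/eqP; rewrite oppr_eq0.
have Sg0 : S g`_0 != 0.
  by apply: contra g00 => /eqP h0; apply/eqP/Sinj; rewrite h0; case: HS.
have gnz : g != 0 by apply: contraNneq g00 => ->; rewrite coef0.
have sg' : size g' = size g.
  apply: size_map_poly_id0; rewrite lead_coefE.
  apply: contra gnz => /eqP h0.
  have : g`_(size g).-1 = 0 by apply: Sinj; rewrite h0; case: HS.
  by move/eqP; rewrite -lead_coefE lead_coef_eq0.
have g'nz : g' != 0 by rewrite -size_poly_gt0 sg' size_poly_gt0.
have mTS : map_poly (iter n theta) g' = g.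
  apply/polyP => k; rewrite !coef_map_id0 ?TS //; first by case: HS.
  by case: (rmor_iter n Hth).
have cg : c' * S g`_0 = g`_0 * a'.
  rewrite /c' /c /skgamma -/S; case: (HS) => _ _ _ SM.
  by rewrite !SM ST (rmorV HS Sinj) mulrAC divfK // mulrC.
have K : skmul theta g h' = 'X^n - c'%:P.
  pose P := skmul theta g h' - ('X^n - c'%:P).
  have Pdef : skmul theta g h' - ('X^n - c'%:P) = P by [].
  have E2 : skmul theta (skmul theta g h') g' = g * 'X^n - skmul theta g a'%:P.
    by rewrite A E1 (skmulBr Hth) (skmul_XnR Hth).
  have E3 : skmul theta ('X^n - c'%:P) g' = g * 'X^n - c' *: g'.
    by rewrite (skmulBl Hth) (skmul_XnL Hth) (skmul_CL Hth) mTS commr_polyXn.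
  have E4 : skmul theta P g' = c' *: g' - skmul theta g a'%:P.
    rewrite -Pdef (skmulBl Hth) E2 E3; ring.
  clearbody P.
  have sP : (size P <= 1)%N.
    have [->|Pnz] := eqVneq P 0; first by rewrite size_poly0.
    have := size_skmul Hth Hinj Pnz g'nz; rewrite E4 => eS.
    have : (size (c' *: g' - skmul theta g a'%:P)%R <= size g)%N.
      apply: leq_trans (size_polyD _ _) _; rewrite geq_max size_polyN.
      rewrite -{1}sg' size_scale_leq /=.
      apply: leq_trans (size_skmul_le Hth _ _) _.
      have := size_polyC_leq1 a'; move: (size g) (size a'%:P) => u v; lia.
    rewrite eS sg'; have : (0 < size g)%N by rewrite size_poly_gt0.
    move: (size g) (size P) => u v; lia.
  have EP := size1_polyC sP.
  have : P`_0 * S g`_0 = 0.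
    have := congr1 (fun p : {poly F} => p`_0) E4.
    rewrite /= {1}EP (skmul_CL Hth) coefB (coef0_skmul Hth) coefC /= !coefZ.
    by rewrite coef_map_id0 ?cg ?subrr //; case: HS.
  move/eqP; rewrite mulf_eq0 (negPf Sg0) orbF => /eqP P00.
  by apply/eqP; rewrite -subr_eq0 Pdef EP P00.
have psiE : forall f, psi f = skmul theta f h' by [].
have hnz : h' != 0.
  apply/eqP => h0; move: K; rewrite h0 (skmul0r Hth) => /eqP.
  by rewrite eq_sym -size_poly_eq0 size_XnsubC.
split.
- move=> f1 f2 [q Hq]; exists (skmul theta q h).
  by rewrite !psiE -(skmulBl Hth) Hq Hhg -K !A.
- move=> f1 f2; exists 0; rewrite (skmul0l Hth) !psiE (skmulDl Hth).
  by rewrite subrr.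
- move=> r f; exists 0; rewrite (skmul0l Hth) !psiE A.
  by rewrite subrr.
- move=> f; split.
  + move=> [q Hq]; exists q; exists 0; rewrite (skmul0l Hth).
    rewrite psiE subr0 -K -A in Hq.
    have : skmul theta (f - skmul theta q g) h' = 0.
      by rewrite (skmulBl Hth) Hq subrr.
    by case/(skmul_eq0 Hth Hinj) => // /eqP; rewrite (negPf hnz).
  + move=> [r [q Hq]]; exists (r + skmul theta q h).
    have Ef : f = skmul theta (r + skmul theta q h) g.
      by rewrite (skmulDl Hth) A -Hhg -Hq addrC subrK.
    by rewrite subr0 psiE Ef A K.
Qed.
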